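(* Let $W$ be a balanced word. The following are equivalent: (i) $W$ is reduced; (ii) $W$ does not contain a subword of the form $RL^nR$ with $n\ge 2$; (iii) $W=L^a(RL)^{k_1}R(RL)^{k_2}R\cdots(RL)^{k_m}RL^b$ for some integers $a,b,m\ge 0$ with $a+b=m$ and $k_i\ge 0$ for $1\le i\le m$.
   Context: Words are finite products of the letters $L,R$; a subword of $a_1\cdots a_n$ is a contiguous block $a_k\cdots a_l$. A word is balanced if it contains equally many $L$'s and $R$'s. A word is prime if it is nonempty, balanced, and cannot be written as a product of two nonempty balanced words. For a balanced word $W=a_1\cdots a_n$, $e_k(W)=\sum_{i=1}^k\overline{a_i}$ ($0\le k\le n$) with $\overline{R}=1$, $\overline{L}=-1$. A prime $P$ of length $n$ is an upper prime if $e_k(P)>0$ for $1\le k\le n-1$, and a lower prime if $e_k(P)<0$ for $1\le k\le n-1$. A word is reduced if it does not contain a subword of the form $UD$ with $U$ an upper prime and $D$ a lower prime. *)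

(* Defs.v *)
From mathcomp Require Import all_boot all_order all_algebra.
Set Implicit Arguments. Unset Strict Implicit. Unset Printing Implicit Defensive.
Import Order.TTheory GRing.Theory Num.Theory.

Inductive letter := L | R.
Definition word := seq letter.

Definition isL (a : letter) : bool := if a is L then true else false.
Definition isR (a : letter) : bool := if a is R then true else false.

Definition subword (S W : word) : Prop := exists X Y : word, W = X ++ S ++ Y.

Definition balanced (W : word) : Prop := count isL W = count isR W.

Definition prime_word (P : word) : Prop :=
  P <> [::] /\ balanced P /\
  ~ (exists U V : word, U <> [::] /\ V <> [::] /\ balanced U /\ balanced V /\ P = U ++ V).

Definition bar (a : letter) : int := if a is R then 1%R else (-1)%R.
Definition e (k : nat) (W : word) : int := (\sum_(a <- take k W) bar a)%R.

Definition upper_prime (P : word) : Prop :=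
  prime_word P /\ forall k, (1 <= k <= (size P).-1)%N -> (0 < e k P)%R.
Definition lower_prime (P : word) : Prop :=
  prime_word P /\ forall k, (1 <= k <= (size P).-1)%N -> (e k P < 0)%R.

Definition reduced (W : word) : Prop :=
  ~ (exists U D : word, upper_prime U /\ lower_prime D /\ subword (U ++ D) W).

Definition no_RLnR (W : word) : Prop :=
  ~ (exists n : nat, (2 <= n)%N /\ subword ([:: R] ++ nseq n L ++ [:: R]) W).

(* L^a (RL)^{k_1} R (RL)^{k_2} R ... (RL)^{k_m} R L^b, with ks = [k_1;...;k_m]. *)
Definition normal_form (a b : nat) (ks : seq nat) : word :=
  nseq a L ++ flatten [seq flatten (nseq k [:: R; L]) ++ [:: R] | k <- ks] ++ nseq b L.

Definition form_iii (W : word) : Prop :=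
  exists (a b : nat) (ks : seq nat), a + b = size ks /\ W = normal_form a b ks.

(* Main.v *)
Require Import Defs.
From mathcomp Require Import all_boot all_order all_algebra zify.
Set Warnings "-notation-overridden,-ambiguous-paths".
Import GRing.Theory Num.Theory.
Local Notation "n %:Z" := (Posz n) : nat_scope.

Fixpoint good (s : nat) (w : word) : bool :=
  match w with
  | [::] => true
  | a :: w' =>
    match s, a with
    | 0, L => good 0 w'
    | 0, R => good 1 w'
    | 1, L => good 2 w'
    | 1, R => good 1 w'
    | 2, L => good 3 w'
    | 2, R => good 1 w'
    | _, L => good 3 w'
    | _, R => false
    end
  end.

Lemma good3_R Y m : good 3 (nseq m L ++ R :: Y) = false.
Proof. by elim: m. Qed.

Lemma bad_mid s U3 D3 Y : 1 <= s -> good s (U3 ++ L :: L :: D3 ++ R :: Y) = false.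
Proof.
elim: U3 s => [|a U3 IH] s Hs /=.
  have H3 : forall D, good 3 (D ++ R :: Y) = false.
    by elim=> [|[] D IHD] //=.
  by case: s Hs => [|[|[|s]]] //= _; rewrite H3.
by case: s Hs => [|[|[|s]]] //= _; case: a => //; rewrite IH.
Qed.

Lemma bad_pre Z : (forall s, good s Z = false) -> forall X s, good s (X ++ Z) = false.
Proof.
move=> HZ; elim=> [|a X IH] s //=.
by case: s => [|[|[|s]]]; case: a.
Qed.

Lemma bad_sub U3 D3 W : subword (R :: U3 ++ L :: L :: D3 ++ [:: R]) W -> good 0 W = false.
Proof.
case=> X [Y ->]; rewrite bad_pre //= => s.
rewrite -catA /=.
case: s => [|[|[|s]]] //=; by rewrite -catA bad_mid.
Qed.

Definition inv (s : nat) (X : word) : Prop :=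
  match s with
  | 0 => True
  | 1 => exists X', X = rcons X' R
  | 2 => exists X', X = X' ++ [:: R; L]
  | _ => exists X' m, 2 <= m /\ X = X' ++ R :: nseq m L
  end.

Lemma bad_wit w : forall s X, inv s X -> good s w = false ->
  exists n, 2 <= n /\ subword ([:: R] ++ nseq n L ++ [:: R]) (X ++ w).
Proof.
elim: w => [|a w IH] s X Hinv //=.
have step : forall s', inv s' (rcons X a) -> good s' w = false ->
  exists n, 2 <= n /\ subword ([:: R] ++ nseq n L ++ [:: R]) (X ++ a :: w).
  move=> s' Hi Hg; rewrite -cat_rcons; exact: IH Hi Hg.
case: s Hinv => [|[|[|s]]] Hinv; case: a step => step.
- by apply: step.
- by apply: step; exists X.
- by apply: step; case: Hinv => X' ->; exists X'; rewrite -!cats1 -!catA.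
- by apply: step; exists X.
- apply: step; case: Hinv => X' ->; exists X', 2; split=> //.
  by rewrite -!cats1 -!catA.
- by apply: step; exists X.
- apply: step; case: Hinv => X' [m [Hm ->]]; exists X', m.+1; split; first lia.
  rewrite -!cats1 -!catA /=.
  by congr (_ ++ _); congr (_ :: _); elim: (m) => //= k ->.
- move=> _; case: Hinv => X' [m [Hm ->]]; exists m; split=> //.
  by exists X', w; rewrite -catA /= -catA.
Qed.

Lemma noRLnR_good W : no_RLnR W <-> good 0 W.
Proof.
split.
- move=> H; apply/negbNE/negP => /negbTE Hg; apply: H.
  by have := @bad_wit W 0 [::] I Hg.
- move=> Hg [n [Hn Hs]].
  have : good 0 W = false; last by rewrite Hg.
  apply: (@bad_sub [::] (nseq (n - 2) L)).
  case: Hs => X [Y ->]; exists X, Y; congr (_ ++ _).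
  by rewrite /= -{1}(subnK Hn) addn2.
Qed.


Definition blk (k : nat) : word := flatten (nseq k [:: R; L]) ++ [:: R].

Lemma good_nseqL s b : good s (nseq b L) = true.
Proof.
elim: b s => [|b IH] [|[|[|s]]] //=.
Qed.

Lemma good_nseqL0 a w : good 0 (nseq a L ++ w) = good 0 w.
Proof. by elim: a. Qed.

Lemma good_blk s k w : s <= 2 -> good s (blk k ++ w) = good 1 w.
Proof.
rewrite /blk -catA /=.
elim: k s => [|k IH] s Hs /=.
  by case: s Hs => [|[|[|s]]].
by case: s Hs => [|[|[|s]]] //= _; apply: IH.
Qed.

Lemma good_blocks ks b s : s <= 2 ->
  good s (flatten (map blk ks) ++ nseq b L) = true.
Proof.
elim: ks s => [|k ks IH] s Hs /=; first exact: good_nseqL.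
by rewrite -catA good_blk // IH.
Qed.

Lemma form_good W : form_iii W -> good 0 W.
Proof.
case=> a [b [ks [_ ->]]]; rewrite /normal_form good_nseqL0.
have -> : [seq flatten (nseq k [:: R; L]) ++ [:: R] | k <- ks] = map blk ks by [].
exact: good_blocks.
Qed.

Lemma good3_all w : good 3 w -> w = nseq (size w) L.
Proof. by elim: w => [|[] w IH] //= /IH {1}->. Qed.

Lemma rl_lr k : R :: flatten (nseq k [:: L; R]) = blk k.
Proof. by rewrite /blk; elim: k => //= k ->. Qed.

Lemma parse12 w :
  (good 1 w -> exists k ks b, w = flatten (nseq k [:: L; R]) ++ flatten (map blk ks) ++ nseq b L) /\
  (good 2 w -> exists k ks b, L :: w = flatten (nseq k [:: L; R]) ++ flatten (map blk ks) ++ nseq b L).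
Proof.
elim: w => [|a w [IH1 IH2]].
  by split=> _; [exists 0, [::], 0 | exists 0, [::], 1].
split; case: a => /=.
- by move/IH2.
- move/IH1 => [k [ks [b ->]]]; exists 0, (k :: ks), b.
  by rewrite /= catA -rl_lr.
- move/good3_all => ->; exists 0, [::], (size w).+2 => //.
- move/IH1 => [k [ks [b ->]]]; exists k.+1, ks, b => //.
Qed.

Lemma count_blocks ks :
  count isL (flatten (map blk ks)) = sumn ks /\
  count isR (flatten (map blk ks)) = size ks + sumn ks.
Proof.
have cb : forall k, count isL (blk k) = k /\ count isR (blk k) = k.+1.
  rewrite /blk => k; rewrite !count_cat /=.
  elim: k => [|k IH] //=; rewrite ?count_cat /=; lia.
elim: ks => [|k ks IH] //=.
rewrite (count_cat _ (blk k)) (count_cat _ (blk k)); have := cb k; lia.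
Qed.

Lemma good0_split W : good 0 W ->
  (exists a w, W = nseq a L ++ R :: w /\ good 1 w) \/ W = nseq (size W) L.
Proof.
elim: W => [|[] W IH] /=; [by right | | by move=> H; left; exists 0, W].
move/IH => [[a [w [-> Hw]]]|->]; last by right; rewrite size_nseq.
by left; exists a.+1, w.
Qed.

Lemma count_nseq_L n : count isL (nseq n L) = n /\ count isR (nseq n L) = 0.
Proof. by elim: n => //= n [-> ->]. Qed.

Lemma good_form W : balanced W -> good 0 W -> form_iii W.
Proof.
rewrite /balanced => Hb /good0_split [[a [w [EW Hw]]]|EW].
- have [k [ks [b Ew]]] := (parse12 w).1 Hw.
  have EW' : W = normal_form a b (k :: ks).
    rewrite EW Ew /normal_form /=; have := rl_lr k; rewrite /blk => <-.
    by rewrite -!catA.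
  exists a, b, (k :: ks); split=> //.
  move: Hb; rewrite EW' /normal_form.
  have := count_blocks (k :: ks); set F := flatten (map blk (k :: ks)).
  rewrite !count_cat; have := count_nseq_L a; have := count_nseq_L b.
  rewrite /=; lia.
- exists 0, 0, [::]; split=> //.
  move: Hb; rewrite EW; have := count_nseq_L (size W).
  move: (size W) => n [-> ->] ->; by [].
Qed.


Definition hgt (w : word) : int := (\sum_(a <- w) bar a)%R.

Lemma hgt_nil : hgt [::] = 0%R.
Proof. by rewrite /hgt big_nil. Qed.
Lemma hgt_cons a w : hgt (a :: w) = (bar a + hgt w)%R.
Proof. by rewrite /hgt big_cons. Qed.
Lemma hgt_cat u v : hgt (u ++ v) = (hgt u + hgt v)%R.
Proof. by rewrite /hgt big_cat. Qed.
Lemma hgt_rcons u a : hgt (rcons u a) = (hgt u + bar a)%R.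
Proof. by rewrite -cats1 hgt_cat hgt_cons hgt_nil addr0. Qed.
Lemma hgt_nseqL n : hgt (nseq n L) = (- n%:Z)%R.
Proof.
elim: n => [|n IH]; first by rewrite hgt_nil.
rewrite /= hgt_cons IH /=; lia.
Qed.
Lemma hgt_count w : hgt w = ((count isR w)%:Z - (count isL w)%:Z)%R.
Proof.
elim: w => [|a w IH]; first by rewrite hgt_nil.
rewrite hgt_cons IH; case: a => /=; lia.
Qed.
Lemma balanced_hgt w : balanced w <-> hgt w = 0%R.
Proof. rewrite /balanced hgt_count; lia. Qed.
Lemma e_hgt k w : e k w = hgt (take k w).
Proof. by []. Qed.

Lemma first_prefix (t : nat) Y :
  (exists Y1 Y2, Y = Y1 ++ Y2 /\ (t%:Z <= hgt Y1)%R) ->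
  exists Y1 Y2, Y = Y1 ++ Y2 /\ hgt Y1 = t%:Z /\
    forall i, i < size Y1 -> (hgt (take i Y1) < t%:Z)%R.
Proof.
elim: Y t => [|x Y IH] t [Y1 [Y2 [EY Ht]]].
  case: Y1 EY Ht => // _; rewrite hgt_nil => Ht.
  exists [::], [::]; rewrite hgt_nil; split=> //; split; [lia | by []].
case: t Ht => [|t] Ht.
  by exists [::], (x :: Y); split=> //; split=> //; rewrite hgt_nil.
case: Y1 EY Ht => [|y Y1] EY Ht; first by move: Ht; rewrite hgt_nil; lia.
case: EY => Exy EY; subst y; rewrite hgt_cons in Ht.
pose t2 := if x is R then t else t.+2.
have Hb : bar x = (t.+1%:Z - t2%:Z)%R by rewrite /t2; case: (x) => /=; lia.
have [Z1 [Z2 [EZ [Hz Hi]]]] : exists Z1 Z2, Y = Z1 ++ Z2 /\ hgt Z1 = t2%:Z /\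
    forall i, i < size Z1 -> (hgt (take i Z1) < t2%:Z)%R.
  apply: IH; exists Y1, Y2; split=> //; lia.
exists (x :: Z1), Z2; split; first by rewrite EZ.
split; first by rewrite hgt_cons Hz Hb; lia.
case=> [|i] /= Hi'; first by rewrite hgt_nil; lia.
rewrite hgt_cons; have := Hi i Hi'; lia.
Qed.

Lemma first_suffix (t : nat) X :
  (exists X1 X2, X = X1 ++ X2 /\ (t%:Z <= hgt X2)%R) ->
  exists X1 X2, X = X1 ++ X2 /\ hgt X2 = t%:Z /\
    forall k, 0 < k <= size X2 -> (0 < hgt (take k X2))%R.
Proof.
elim/last_ind: X t => [|X x IH] t [X1 [X2 [EX Ht]]].
  case: X2 EX Ht => [|? ?]; last by case: X1.
  move=> _; rewrite hgt_nil => Ht.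
  exists [::], [::]; rewrite hgt_nil; split=> //; split; first lia.
  by move=> k; rewrite /=; lia.
case: t Ht => [|t] Ht.
  exists (rcons X x), [::]; split; first by rewrite cats0.
  by split; [rewrite hgt_nil | move=> k /=; lia].
case/lastP: X2 EX Ht => [|X2 y] EX Ht; first by move: Ht; rewrite hgt_nil; lia.
move: EX; rewrite -rcons_cat => /rcons_inj [EX Exy]; subst y.
rewrite hgt_rcons in Ht.
pose t2 := if x is R then t else t.+2.
have Hb : bar x = (t.+1%:Z - t2%:Z)%R by rewrite /t2; case: (x) => /=; lia.
have [Z1 [Z2 [EZ [Hz Hi]]]] : exists Z1 Z2, X = Z1 ++ Z2 /\ hgt Z2 = t2%:Z /\
    forall k, 0 < k <= size Z2 -> (0 < hgt (take k Z2))%R.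
  apply: IH; exists X1, X2; split=> //; lia.
exists Z1, (rcons Z2 x); split; first by rewrite EZ rcons_cat.
split; first by rewrite hgt_rcons Hz Hb; lia.
move=> k; rewrite size_rcons => Hk.
rewrite -cats1 take_cat.
case: ltnP => Hk2; first by apply: Hi; lia.
have [Ek|Hne] := eqVneq k (size Z2).
  rewrite Ek subnn take0 cats0; have := Hi (size Z2); rewrite take_size; apply; lia.
have -> : k - size Z2 = 1 by lia.
rewrite /= hgt_cat hgt_cons hgt_nil Hz Hb; lia.
Qed.


Lemma mk_prime P : P <> [::] -> hgt P = 0%R ->
  (forall k, 0 < k <= (size P).-1 -> hgt (take k P) <> 0%R) -> prime_word P.
Proof.
move=> Hne Hh Hk; split=> //; split; first by apply/balanced_hgt.
case=> U [V [HU [HV [HbU [_ EP]]]]].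
apply: (Hk (size U)).
- rewrite EP size_cat; case: U HU {HbU EP} => // a U _; case: V HV => // b V _ /=.
  rewrite addnS /=; lia.
- by rewrite EP take_size_cat //; apply/balanced_hgt.
Qed.

Lemma mk_upper P : P <> [::] -> hgt P = 0%R ->
  (forall k, 0 < k <= (size P).-1 -> (0 < hgt (take k P))%R) -> upper_prime P.
Proof.
move=> Hne Hh Hk; split; last exact: Hk.
apply: mk_prime => // k /Hk; lia.
Qed.

Lemma mk_lower P : P <> [::] -> hgt P = 0%R ->
  (forall k, 0 < k <= (size P).-1 -> (hgt (take k P) < 0)%R) -> lower_prime P.
Proof.
move=> Hne Hh Hk; split; last exact: Hk.
apply: mk_prime => // k /Hk; lia.
Qed.

Lemma upper_shape U : upper_prime U -> exists U3, U = R :: rcons U3 L.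
Proof.
case: U => [|x U'] [[Hne [Hb _]] He]; first by case: Hne.
clear Hne.
have Hsz : U' <> [::] by move=> E; move: Hb; rewrite E /balanced; case: (x).
case/lastP: U' Hsz He Hb => [//|U3 y] _ He Hb.
have H1 := He 1; rewrite /= size_rcons in H1.
have {}H1 := H1 isT.
have Ex : x = R.
  by move: H1; rewrite e_hgt /= take0 hgt_cons hgt_nil; case: (x).
have H2 := He (size U3).+1; rewrite /= size_rcons in H2.
have {}H2 := H2 (leqnn _).
move: H2; rewrite e_hgt /= -cats1 take_size_cat // => H2.
move/balanced_hgt: Hb; rewrite -rcons_cons hgt_rcons => Hb.
have Ey : y = L by move: Hb H2; case: (y) => //=; lia.
by exists U3; rewrite Ex Ey cats1.
Qed.

Lemma lower_shape D : lower_prime D -> exists D3, D = L :: rcons D3 R.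
Proof.
case: D => [|x U'] [[Hne [Hb _]] He]; first by case: Hne.
clear Hne.
have Hsz : U' <> [::] by move=> E; move: Hb; rewrite E /balanced; case: (x).
case/lastP: U' Hsz He Hb => [//|U3 y] _ He Hb.
have H1 := He 1; rewrite /= size_rcons in H1.
have {}H1 := H1 isT.
have Ex : x = L.
  by move: H1; rewrite e_hgt /= take0 hgt_cons hgt_nil; case: (x).
have H2 := He (size U3).+1; rewrite /= size_rcons in H2.
have {}H2 := H2 (leqnn _).
move: H2; rewrite e_hgt /= -cats1 take_size_cat // => H2.
move/balanced_hgt: Hb; rewrite -rcons_cons hgt_rcons => Hb.
have Ey : y = R by move: Hb H2; case: (y) => //=; lia.
by exists U3; rewrite Ex Ey cats1.
Qed.


Lemma noRLnR_reduced W : no_RLnR W -> reduced W.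
Proof.
move/noRLnR_good => Hg [U [D [/upper_shape [U3 ->] [/lower_shape [D3 ->] Hs]]]].
have : good 0 W = false; last by rewrite Hg.
apply: (@bad_sub U3 D3).
case: Hs => X [Y ->]; exists X, Y; congr (_ ++ _).
by rewrite -!cats1 /= -!catA.
Qed.

Lemma reduced_noRLnR W : balanced W -> reduced W -> no_RLnR W.
Proof.
move=> Hb Hred [n [Hn [X [Y EW]]]]; apply: Hred.
move/balanced_hgt: Hb; rewrite EW !(hgt_cat, hgt_cons, hgt_nseqL, hgt_nil) => Hb.
have [t [Htn [HX HY]]] : exists t, t <= n - 2 /\
   (exists X1 X2, X = X1 ++ X2 /\ (t%:Z <= hgt X2)%R) /\
   (exists Y1 Y2, Y = Y1 ++ Y2 /\ ((n - 2 - t)%:Z <= hgt Y1)%R).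
  case E: (hgt X) => [p|p].
  - case: (leqP p (n - 2)) => Hp.
    + exists p; split=> //; split.
        by exists [::], X; rewrite E; split=> //.
      exists Y, [::]; rewrite cats0; split=> //; move: Hb; rewrite E /=; lia.
    + exists (n - 2); split=> //; split.
        by exists [::], X; rewrite E; split=> //=; lia.
      exists [::], Y; rewrite hgt_nil; split=> //; lia.
  - exists 0; split=> //; split.
      by exists X, [::]; rewrite cats0 hgt_nil.
    exists Y, [::]; rewrite cats0; split=> //; move: Hb; rewrite E /=; lia.
have [X1 [X2 [EX [HX2 HXi]]]] := @first_suffix t X HX.
have [Y1 [Y2 [EY [HY1 HYi]]]] := @first_prefix (n - 2 - t) Y HY.
exists (X2 ++ R :: nseq t.+1 L), (nseq (n - t.+1) L ++ R :: Y1); split; [|split].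
- apply: mk_upper; first by case: X2 {EX HX2 HXi}.
    rewrite hgt_cat hgt_cons hgt_nseqL HX2 /=; lia.
  move=> k; rewrite size_cat /= size_nseq => Hk.
  rewrite take_cat; case: ltnP => Hk2; first by apply: HXi; lia.
  case Ej: (k - size X2) => [|j].
    have Ek : k = size X2 by lia.
    rewrite cats0; have := HXi (size X2); rewrite take_size; apply; lia.
  rewrite /= (@take_nseq _ j t.+1 L); last by lia.
  rewrite hgt_cat hgt_cons hgt_nseqL HX2 /=; lia.
- apply: mk_lower; first by case: (n - t.+1).
    rewrite hgt_cat hgt_cons hgt_nseqL HY1 /=; lia.
  move=> k; rewrite size_cat /= size_nseq => Hk.
  rewrite take_cat size_nseq; case: ltnP => Hk2.
    rewrite take_nseq; last by lia.
    rewrite hgt_nseqL; lia.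
  case Ej: (k - (n - t.+1)) => [|j].
    rewrite cats0 hgt_nseqL; lia.
  rewrite /= hgt_cat hgt_cons hgt_nseqL.
  have := HYi j; rewrite /=; lia.
- exists X1, Y2; rewrite EX EY.
  have -> : n = t.+1 + (n - t.+1) by lia.
  rewrite nseqD /= -!catA /=.
  have -> : t.+1 + (n - t.+1) - t.+1 = n - t.+1 by lia.
  by [].
Qed.

Theorem proposition6p4 (W : word) :
  balanced W ->
  (reduced W <-> no_RLnR W) /\ (no_RLnR W <-> form_iii W).
Proof.
move=> Hb; split; split.
- exact: reduced_noRLnR.
- exact: noRLnR_reduced.
- by move/noRLnR_good; apply: good_form.
- by move/form_good/noRLnR_good.
Qed.
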